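(* If $\pi$ is a permutation with exactly one descent, then $\mu(1,\pi)=-\mu(21,\pi)$.
   Context: A permutation of length $n$ is an arrangement of $1,\dots,n$; $1$ denotes the permutation of length one and $21$ the decreasing permutation of length two. The permutation poset is ordered by pattern containment: $\sigma\le\pi$ if $\pi$ has a subsequence in the same relative order as $\sigma$. A descent of $\pi$ is an index $i$ with $\pi_i>\pi_{i+1}$. $\mu$ is the Möbius function of this poset: $\mu(a,a)=1$, $\mu(a,b)=-\sum_{a\le z<b}\mu(a,z)$ for $a<b$, $\mu(a,b)=0$ if $a\not\le b$. *)

(* Defs.v *)
From mathcomp Require Import all_boot all_order all_algebra.
Set Implicit Arguments. Unset Strict Implicit. Unset Printing Implicit Defensive.
Import GRing.Theory Num.Theory.

Definition is_perm (s : seq nat) : bool := perm_eq s (iota 1 (size s)).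

Definition std (s : seq nat) : seq nat :=
  [seq (count (fun y => y < x) s).+1 | x <- s].

Fixpoint subseqs (s : seq nat) : seq (seq nat) :=
  if s is x :: s' then [seq x :: t | t <- subseqs s'] ++ subseqs s' else [:: [::]].

Definition contains (sigma pi : seq nat) : bool :=
  has (fun t => std t == sigma) (subseqs pi).

Definition perms_below (pi : seq nat) : seq (seq nat) :=
  flatten [seq permutations (iota 1 k) | k <- iota 0 (size pi)].

(* Moebius function: mu(a,a)=1, mu(a,b) = - sum_{a<=z<b} mu(a,z) if a<b, 0 otherwise.
   Any z < b has size < size b, so recursion with fuel (size b) suffices. *)
Fixpoint mu_aux (k : nat) (a b : seq nat) : int :=
  if a == b then 1%R
  else if ~~ contains a b then 0%R
  else match k with
       | 0 => 0%R
       | k'.+1 => (- \sum_(z <- perms_below b | contains a z && contains z b)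
                      mu_aux k' a z)%R
       end.

Definition mu (a b : seq nat) : int := mu_aux (size b) a b.

Definition descents (pi : seq nat) : nat :=
  count (fun i => nth 0 pi i > nth 0 pi i.+1) (iota 0 (size pi).-1).

(* Main.v *)
Require Import Defs.
From mathcomp Require Import all_boot all_order all_algebra.
Set Implicit Arguments. Unset Strict Implicit. Unset Printing Implicit Defensive.
Import GRing.Theory Num.Theory.

Module Aux.

Lemma mem_subseqs (s t : seq nat) : (t \in subseqs s) = subseq t s.
Proof.
elim: s t => [|x s IH] t /=.
  by case: t => [|y t]; rewrite ?in_cons ?in_nil //= orbF.
rewrite mem_cat IH; case: t => [|y t] /=.
  by rewrite sub0seq orbT.
case: (eqVneq y x) => [->|ne].
  have inj : injective (cons x) by move=> a b [].
  rewrite (mem_map inj) IH.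
  apply/orP/idP => [[]//|]; last by move=> ->; left.
  by move=> h; apply: subseq_trans h; apply: subseq_cons.
rewrite (_ : (y :: t \in _) = false) //.
by apply/mapP => -[u _ [e]]; move: ne; rewrite e eqxx.
Qed.

Lemma containsP a b : reflect (exists2 t, subseq t b & std t = a) (contains a b).
Proof.
apply: (iffP hasP) => [[t]|[t]]; rewrite ?mem_subseqs => h1 h2; exists t;
  rewrite ?mem_subseqs //; exact/eqP.
Qed.

Lemma std_map (g : nat -> nat) t :
  {in t &, forall x y, (g x < g y) = (x < y)} -> std (map g t) = std t.
Proof.
move=> h; rewrite /std -map_comp; apply/eq_in_map => x xt /=.
rewrite count_map; congr _.+1; apply: eq_in_count => y yt /=; exact: h.
Qed.

Lemma count_lt_strict (p q : pred nat) s w :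
  subpred p q -> w \in s -> q w -> ~~ p w -> count p s < count q s.
Proof.
move=> spq; elim: s => [|x s IH] //=; rewrite in_cons => /orP[/eqP <-|ws] qw pw.
  rewrite (negbTE pw) qw add0n add1n ltnS; exact: sub_count.
have := IH ws qw pw; case px: (p x); first by rewrite (spq _ px) !add1n ltnS.
by case: (q x) => //= h; apply: ltn_addl.
Qed.

Definition gstd (t : seq nat) x := (count (fun z => z < x) t).+1.

Lemma std_E t : std t = map (gstd t) t.
Proof. by []. Qed.

Lemma gstd_mono t : {in t &, forall x y, (gstd t x < gstd t y) = (x < y)}.
Proof.
move=> x y xt yt; rewrite /gstd ltnS; case: (ltnP x y) => xy.
  apply: (count_lt_strict (w := x)) => //=; last by rewrite ltnn.
  by move=> z /= zx; apply: ltn_trans xy.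
by apply/negbTE; rewrite -leqNgt; apply: sub_count => z /= zy; apply: leq_trans zy _.
Qed.

Lemma std_mask m t : std (mask m (std t)) = std (mask m t).
Proof.
rewrite [std t]std_E -map_mask std_map // => x y /mem_mask xt /mem_mask yt.
exact: gstd_mono.
Qed.

Lemma std_std t : std (std t) = std t.
Proof. by rewrite [std t]std_E std_map //; apply: gstd_mono. Qed.

Lemma size_std t : size (std t) = size t.
Proof. exact: size_map. Qed.

Lemma contains_trans a b c : contains a b -> contains b c -> contains a c.
Proof.
move=> /containsP[u /subseqP[m sm eu] <-] /containsP[t tc eb].
subst u b.
apply/containsP; exists (mask m t); last by rewrite std_mask.
apply: subseq_trans tc; apply/subseqP; exists m => //.
by move: sm; rewrite size_map.
Qed.

Lemma contains_size a b : contains a b -> size a <= size b.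
Proof. by move=> /containsP[t /size_subseq h <-]; rewrite size_map. Qed.

Lemma contains_subseq a b c : contains a b -> subseq b c -> contains a c.
Proof.
move=> /containsP[t tb <-] bc; apply/containsP; exists t => //.
exact: subseq_trans bc.
Qed.

Lemma std_pair x y : x != y -> std [:: x; y] = if x < y then [:: 1; 2] else [:: 2; 1].
Proof.
move=> ne; rewrite /std /= !ltnn.
case: (ltngtP x y) => h //; last by rewrite h eqxx in ne.
Qed.

Lemma contains1 z : contains [:: 1] z = (z != [::]).
Proof.
case: z => [|x z] //=.
apply/containsP; exists [:: x]; first by rewrite sub1seq mem_head.
by rewrite /std /= ltnn.
Qed.

Lemma avoid21_pairwise z : uniq z -> ~~ contains [:: 2; 1] z -> pairwise ltn z.
Proof.
elim: z => [|x z IH] //= /andP[xz uz] nc; apply/andP; split; last first.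
  apply: IH => //; apply: contraNN nc => h; apply: contains_subseq h _; exact: subseq_cons.
apply/allP => y yz; apply: contraNT nc => nxy; apply/containsP; exists [:: x; y].
  by rewrite /= eqxx sub1seq.
have ne : x != y by apply: contraNneq xz => ->.
by rewrite std_pair // ifN.
Qed.

Lemma avoid12_pairwise z : uniq z -> ~~ contains [:: 1; 2] z -> pairwise (fun x y => y < x) z.
Proof.
elim: z => [|x z IH] //= /andP[xz uz] nc; apply/andP; split; last first.
  apply: IH => //; apply: contraNN nc => h; apply: contains_subseq h _; exact: subseq_cons.
apply/allP => y yz; apply: contraNT nc => nxy; apply/containsP; exists [:: x; y].
  by rewrite /= eqxx sub1seq.
have ne : x != y by apply: contraNneq xz => ->.
move: nxy => /= nxy.
rewrite std_pair //; case: (ltngtP x y) => // h; first by rewrite h in nxy.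
by rewrite h eqxx in ne.
Qed.

Lemma sorted_avoid21 s : sorted ltn s -> ~~ contains [:: 2; 1] s.
Proof.
move=> ss; apply/containsP => -[t ts st].
have := subseq_sorted ltn_trans ts ss.
have : size t = 2 by rewrite -size_std st.
case: t st ts => [|x [|y [|]]] //= st _ _; rewrite andbT => xy.
by move: st; rewrite std_pair ?xy // neq_ltn xy.
Qed.

Lemma avoid21_iota z k : perm_eq z (iota 1 k) -> ~~ contains [:: 2; 1] z -> z = iota 1 k.
Proof.
move=> pz nc; have uz : uniq z by rewrite (perm_uniq pz) iota_uniq.
apply: (irr_sorted_eq ltn_trans ltnn); last exact: perm_mem.
  by rewrite sorted_pairwise; [exact: avoid21_pairwise | exact: ltn_trans].
exact: iota_ltn_sorted.
Qed.

Fixpoint ds (s : seq nat) : nat :=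
  match s with
  | x :: s' => (match s' with y :: _ => y < x | [::] => false end) + ds s'
  | [::] => 0
  end.

Lemma count_iotaS (P : pred nat) m n :
  count P (iota m.+1 n) = count (fun i => P i.+1) (iota m n).
Proof. by elim: n m => [|n IH] m //=; rewrite IH. Qed.

Lemma descents_ds s : descents s = ds s.
Proof.
elim: s => [|x [|y s] IH] //=; rewrite /descents /= in IH *.
by rewrite count_iotaS -IH.
Qed.

Lemma ds_rm x y s : ds (x :: s) <= ds (x :: y :: s).
Proof.
case: s => [|w s] /=; first by [].
set r := (X in _ + X <= _ + (_ + X)); rewrite addnA leq_add2r.
case: (ltnP w x) => //= wx; case: (ltnP y x) => //= yx.
by rewrite (leq_trans wx yx).
Qed.

Lemma ds_subseq s : forall t, subseq t s -> ds t <= ds s /\ forall x, ds (x :: t) <= ds (x :: s).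
Proof.
elim: s => [|y s IH] t.
  by move=> /eqP ->.
case: t => [|z t].
  move=> _; split => // x /=; exact: leq0n.
rewrite /=; case: (eqVneq z y) => [->|ne] h.
  have [h1 h2] := IH _ h; split; first by rewrite /= -/(ds (y :: t)) ; move: (h2 y) => /=.
  move=> x; have := h2 y => /=; rewrite -!/(ds (_ :: _)) => h3.
  by rewrite leq_add2l.
have [h1 h2] := IH _ h; split.
  apply: (leq_trans h1); rewrite /=; case: s {IH h h1 h2} => //= w s; exact: leq_addl.
move=> x; apply: (leq_trans (h2 x)); exact: ds_rm.
Qed.

Lemma ds_map (g : nat -> nat) t :
  {in t &, forall x y, (g x < g y) = (x < y)} -> ds (map g t) = ds t.
Proof.
elim: t => [|x [|y t] IH] h //=.
rewrite h ?in_cons ?eqxx ?orbT //; congr (_ + _).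
apply: IH => a b ha hb; apply: h; rewrite in_cons ?ha ?hb orbT //.
Qed.

Lemma ds_std t : ds (std t) = ds t.
Proof. rewrite std_E; apply: ds_map; exact: gstd_mono. Qed.

Lemma ds_contains z p : contains z p -> ds z <= ds p.
Proof.
move=> /containsP[t tp <-]; rewrite ds_std; exact: (ds_subseq tp).1.
Qed.

Lemma ds21 z : contains [:: 2; 1] z -> 0 < ds z.
Proof. by move=> /ds_contains. Qed.

Lemma contains12 z : uniq z -> 3 <= size z -> ds z <= 1 -> contains [:: 1; 2] z.
Proof.
move=> uz sz dz; apply: contraT => nc.
have := avoid12_pairwise uz nc.
case: z uz sz dz {nc} => [|x [|y [|w s]]] //= _ _.
move=> dz /and3P[/and3P[yx wx _] /andP[wy _] _].
by move: dz; rewrite yx wy.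
Qed.
Section S4. Local Open Scope ring_scope.

Lemma perms_belowP z b : z \in perms_below b ->
  perm_eq z (iota 1 (size z)) /\ (size z < size b)%N.
Proof.
move=> /flatten_mapP[k]; rewrite mem_iota add0n /= => kb.
rewrite mem_permutations => pz; have sz := perm_size pz.
by rewrite size_iota in sz; rewrite sz.
Qed.

Lemma contains_nil a : contains a [::] = (a == [::]).
Proof. by rewrite /contains /= orbF eq_sym. Qed.

Lemma mu_auxS k a b : mu_aux k.+1 a b =
  if a == b then 1 else if ~~ contains a b then 0 else
  - \sum_(z <- perms_below b | contains a z && contains z b) mu_aux k a z.
Proof. reflexivity. Qed.

Lemma mu_fuel a k b : (size b <= k)%N -> mu_aux k a b = mu a b.
Proof.
elim/ltn_ind: k b => k IH b sb; rewrite /mu.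
case Hs: (size b) sb => [|n] sb.
  move/size0nil: Hs => ->; case: k {IH} sb => [|k] _; first reflexivity.
  rewrite mu_auxS /= contains_nil; case: (a == [::]); reflexivity.
case: k IH sb => [|k] IH sb; first by [].
rewrite !mu_auxS.
case: (a == b); first reflexivity.
case: (~~ contains a b); first reflexivity.
congr (- _).
rewrite big_seq_cond [RHS]big_seq_cond; apply: eq_bigr => z /andP[/perms_belowP[_ sz] _].
rewrite Hs ltnS in sz.
rewrite (IH k (ltnSn k) z (leq_trans sz sb)).
by rewrite (IH n sb z sz).
Qed.


Lemma mu_unfold a b : a != b -> contains a b ->
  mu a b = - \sum_(z <- perms_below b | contains a z && contains z b) mu a z.
Proof.
move=> ne cab; rewrite {1}/mu.
case Hs: (size b) => [|n].
  by move/size0nil: Hs => eb; subst b; rewrite contains_nil (negbTE ne) in cab.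
rewrite mu_auxS (negbTE ne) cab /=; congr (- _).
rewrite big_seq_cond [RHS]big_seq_cond; apply: eq_bigr => z /andP[/perms_belowP[_ sz] _].
by apply: mu_fuel; rewrite -ltnS -Hs.
Qed.

Lemma sum_inc (b : seq nat) (Q : pred (seq nat)) (F : seq nat -> int) :
  (forall z, uniq z -> Q z -> ~~ contains [:: 2; 1] z) ->
  \sum_(z <- perms_below b | Q z) F z = \sum_(k < size b | Q (iota 1 k)) F (iota 1 k).
Proof.
move=> hQ; rewrite /perms_below big_flatten big_map.
rewrite -(big_mkord (fun k => Q (iota 1 k)) (fun k => F (iota 1 k))).
rewrite /index_iota subn0 [RHS]big_mkcond; apply: eq_bigr => k _.
rewrite big_mkcond (bigD1_seq (iota 1 k)) ?permutations_uniq //; last first.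
  by rewrite mem_permutations.
rewrite big1_seq => [|z /andP[nz]]; first by rewrite /= addr0.
rewrite mem_permutations => pz; case: ifP => // qz.
have uz : uniq z by rewrite (perm_uniq pz) iota_uniq.
by rewrite (avoid21_iota pz (hQ _ uz qz)) eqxx in nz.
Qed.
End S4.
Section S5. Local Open Scope ring_scope.

Lemma count_lt_iota m n x : (m <= x <= m + n)%N ->
  count (fun z => z < x)%N (iota m n) = (x - m)%N.
Proof.
elim: n m => [|n IH] m /=.
  by rewrite addn0 -eqn_leq => /eqP ->; rewrite subnn.
move=> /andP[mx xmn]; case: (ltngtP m x) mx => // [lt|eq] _.
  by rewrite add1n IH ?lt ?addSnnS // subnSK.
subst x; rewrite add0n subnn (@eq_in_count _ _ pred0) ?count_pred0 //.
move=> z; rewrite mem_iota => /andP[h _] /=; apply/negbTE; rewrite -leqNgt.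
exact: ltnW.
Qed.

Lemma std_iota j : std (iota 1 j) = iota 1 j.
Proof.
rewrite /std -[RHS]map_id; apply/eq_in_map => x; rewrite mem_iota => /andP[h1 h2].
rewrite count_lt_iota ?h1 ?(ltnW h2) // subn1 prednK //.
Qed.

Lemma contains_iota j k : (j <= k)%N -> contains (iota 1 j) (iota 1 k).
Proof.
move=> jk; apply/containsP; exists (iota 1 j); last exact: std_iota.
by rewrite -(subnKC jk) iotaD prefix_subseq.
Qed.

Lemma sorted_ds s : sorted ltn s -> ds s = 0%N.
Proof.
elim: s => [|x [|y s] IH] // hs.
have dsE : ds [:: x, y & s] = ((y < x) + ds (y :: s))%N by [].
case/andP: hs => xy ps; rewrite dsE IH //.
by rewrite ltnNge (ltnW xy).
Qed.

Definition v (j : nat) : int := if j == 1%N then 1 else if j == 2%N then -1 else 0.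

Lemma sum_v2 : \sum_(j < 2) v j = 1.
Proof. by rewrite !big_ord_recl big_ord0. Qed.

Lemma sum_v3 n : \sum_(j < n.+3) v j = 0.
Proof.
rewrite !big_ord_recl big1 => [|i _]; first by rewrite /v /=.
by rewrite /v /bump /=.
Qed.

Lemma mu_iota k : (0 < k)%N -> mu [:: 1%N] (iota 1 k) = v k.
Proof.
elim/ltn_ind: k => k IH k0.
case: (eqVneq k 1%N) => [->|k1]; first reflexivity.
have k2 : (2 <= k)%N by rewrite ltn_neqAle eq_sym k1 k0.
rewrite mu_unfold; last first.
  - by rewrite contains1 -size_eq0 size_iota -lt0n.
  - by apply/eqP => /(congr1 size); rewrite size_iota => e; rewrite -e eqxx in k1.
rewrite (sum_inc _ _ (Q := fun z => contains [:: 1%N] z && contains z (iota 1 k))); last first.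
  move=> z _ /andP[_ czk]; apply: contraNN (sorted_avoid21 (iota_ltn_sorted 1 k)) => h.
  exact: contains_trans h czk.
rewrite size_iota.
have -> : \sum_(j < k | contains [:: 1%N] (iota 1 j) && contains (iota 1 j) (iota 1 k))
            mu [:: 1%N] (iota 1 j) = \sum_(j < k) v j.
  rewrite big_mkcond; apply: eq_bigr => j _.
  rewrite contains_iota ?(ltnW (ltn_ord j)) // andbT contains1 -size_eq0 size_iota.
  case: (eqVneq (nat_of_ord j) 0%N) => [->|j0] //=.
  by rewrite IH // lt0n.
case: k k0 k1 k2 IH => [|[|[|k]]] //= _ _ _ _.
  by rewrite sum_v2.
by rewrite sum_v3 oppr0.
Qed.
End S5.
Section S6. Local Open Scope ring_scope.

Lemma base21 : mu [:: 1%N] [:: 2%N; 1%N] + mu [:: 2%N; 1%N] [:: 2%N; 1%N] = 0.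
Proof. rewrite /mu /= unlock /=. vm_compute. reflexivity. Qed.

Lemma f0 n : forall pi, (size pi <= n)%N -> is_perm pi -> ds pi = 1%N ->
  mu [:: 1%N] pi + mu [:: 2%N; 1%N] pi = 0.
Proof.
elim: n => [|n IH] pi sp pp dp.
  by move: sp dp; rewrite leqn0 size_eq0 => /eqP ->.
have upi : uniq pi by rewrite (perm_uniq pp) iota_uniq.
case: (eqVneq pi [:: 2%N; 1%N]) => [->|n21]; first exact: base21.
have s3 : (3 <= size pi)%N.
  case: pi sp pp dp upi n21 => [|x [|y [|w s]]] //= _ pp.
  have hx : x \in iota 1 2 by rewrite -(perm_mem pp) mem_head.
  have hy : y \in iota 1 2 by rewrite -(perm_mem pp) !in_cons eqxx orbT.
  move: hx hy; rewrite !mem_iota /= => /andP[x1 x2] /andP[y1 y2].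
  case: x x1 x2 {pp} => [|[|[|x]]] // _ _; case: y y1 y2 => [|[|[|y]]] //.
have c21 : contains [:: 2%N; 1%N] pi.
  apply: contraT => nc; have := sorted_ds (_ : sorted ltn pi).
  rewrite dp => h; have : (1 = 0)%N by apply: h; rewrite sorted_pairwise;
    [exact: avoid21_pairwise | exact: ltn_trans].
  by [].
have pn : pi != [::] by rewrite -size_eq0 -lt0n (leq_trans _ s3).
have c1 : contains [:: 1%N] pi by rewrite contains1.
have ne1 : [:: 1%N] != pi by apply/eqP => e; rewrite -e in s3.
have ne2 : [:: 2%N; 1%N] != pi by rewrite eq_sym.
rewrite (mu_unfold ne1 c1) (mu_unfold ne2 c21).
rewrite (bigID (fun z => contains [:: 2%N; 1%N] z)) /=.
have e1 : \sum_(z <- perms_below pi | (contains [:: 1%N] z && contains z pi) &&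
                 contains [:: 2%N; 1%N] z) mu [:: 1%N] z =
          \sum_(z <- perms_below pi | contains [:: 2%N; 1%N] z && contains z pi) mu [:: 1%N] z.
  apply: eq_bigl => z; case c21z: (contains [:: 2%N; 1%N] z); rewrite ?andbF ?andbT //.
  rewrite contains1 -size_eq0 -lt0n; have := contains_size c21z => /= h.
  by rewrite (leq_trans _ h).
have e2 : \sum_(z <- perms_below pi | contains [:: 2%N; 1%N] z && contains z pi)
            (mu [:: 1%N] z + mu [:: 2%N; 1%N] z) = 0.
  rewrite big1_seq // => z /andP[/andP[c21z czp] /perms_belowP[pz sz]].
  apply: IH => //; first by rewrite -ltnS (leq_trans sz sp).
  apply/eqP; rewrite eqn_leq ds21 // andbT -dp; exact: ds_contains.
have e3 : \sum_(z <- perms_below pi | (contains [:: 1%N] z && contains z pi) &&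
                 ~~ contains [:: 2%N; 1%N] z) mu [:: 1%N] z = 0.
  rewrite (sum_inc _ _ (Q := fun z => (contains [:: 1%N] z && contains z pi) &&
                 ~~ contains [:: 2%N; 1%N] z)); last by move=> z _ /andP[].
  have [m hm] : exists m, size pi = m.+3.
    by exists (size pi - 3)%N; rewrite -addn3 subnK.
  rewrite hm big_mkcond -[RHS](sum_v3 m); apply: eq_bigr => -[k hk] _ /=.
  case: (posnP k) => [->|k0]; first by rewrite contains1.
  have cq : contains [:: 1%N] (iota 1 k) by rewrite contains1 -size_eq0 size_iota -lt0n.
  rewrite cq (sorted_avoid21 (iota_ltn_sorted 1 k)) andbT /= mu_iota //.
  case: ifP => // cik.
  case: k k0 hk cik {cq} => [|[|[|k]]] //= _ _.
    by rewrite c1.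
  by rewrite contains12 // dp.
rewrite e1 e3 addr0 -opprD -big_split /= e2 oppr0 //.
Qed.
End S6.
End Aux.

Theorem mainTheorem9 (pi : seq nat) :
  is_perm pi -> descents pi = 1%N ->
  mu [:: 1%N] pi = (- mu [:: 2%N; 1%N] pi)%R.
Proof.
move=> pp d; rewrite Aux.descents_ds in d.
have := Aux.f0 (leqnn (size pi)) pp d.
by move/eqP; rewrite GRing.addr_eq0 => /eqP.
Qed.
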